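(* For every positive integer $n$ there exists a bijection $\phi:\mathcal{H}_n\to\mathcal{H}_n$ such that $\mathrm{rep}(\lambda)=\mathrm{even}(\phi(\lambda))$ for every $\lambda\in\mathcal{H}_n$.
   Context: A partition is a finite nonempty weakly decreasing sequence $\lambda=(\lambda_1,\ldots,\lambda_k)$ of positive integers; $\ell(\lambda)=k$. The perimeter is $\Gamma(\lambda)=\lambda_1+\ell(\lambda)-1$; $\mathcal{H}_n$ is the set of partitions with perimeter $n$. $\mathrm{rep}(\lambda)=|\{1\le i\le \ell(\lambda)-1:\lambda_i=\lambda_{i+1}\}|$ and $\mathrm{even}(\lambda)=|\{1\le i\le\ell(\lambda):\lambda_i\text{ even}\}|$. *)

(* Defs.v *)
From mathcomp Require Import all_boot.
Set Implicit Arguments. Unset Strict Implicit. Unset Printing Implicit Defensive.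

Definition is_partition (l : seq nat) : bool :=
  [&& l != [::], sorted geq l & all (fun x => 0 < x) l].

Definition perimeter (l : seq nat) : nat := head 0 l + size l - 1.

Definition in_Hn (n : nat) (l : seq nat) : bool :=
  is_partition l && (perimeter l == n).

Definition Hn (n : nat) := {l : seq nat | in_Hn n l}.

Definition rep (l : seq nat) : nat :=
  count (fun i => nth 0 l i == nth 0 l i.+1) (iota 0 (size l).-1).

Definition even_parts (l : seq nat) : nat := count (fun x => ~~ odd x) l.

(* Main.v *)
Require Import Defs.
From mathcomp Require Import all_boot.
From mathcomp Require Import zify.

Definition op (b : bool) (l : seq nat) :=
  if b then (head 0 l).+1 :: behead l else head 0 l :: l.
Fixpoint build (s : seq bool) : seq nat :=
  match s with [::] => [:: 1] | b :: s' => op b (build s') end.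

Lemma build_cons s : build s = head 0 (build s) :: behead (build s).
Proof. by case: s => [|[] s]. Qed.

Lemma build_hd s : head 0 (behead (build s)) <= head 0 (build s).
Proof.
elim: s => [|[] s IH] //=; first exact: leqW.
Qed.

Lemma path_geq_up x x' t : path geq x t -> x <= x' -> path geq x' t.
Proof.
case: t => [|y r] //= /andP [H1 H2] H3; rewrite H2 andbT.
exact: leq_trans H1 H3.
Qed.

Lemma build_sorted s : sorted geq (build s).
Proof.
elim: s => [|b s IH] //=.
move: IH; rewrite (build_cons s) /op; case: b => /= H.
  by apply: path_geq_up H _; exact: leqW.
by rewrite leqnn.
Qed.

Lemma build_pos s : all (fun x => 0 < x) (build s).
Proof.
elim: s => [|b s IH] //=.
move: IH; rewrite (build_cons s) /op; case: b => /= /andP [H1 H2].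
  by [].
by rewrite /= H1 H2.
Qed.

Lemma build_perim s : head 0 (build s) + size (build s) = (size s).+2.
Proof.
elim: s => [|b s IH] //=.
move: IH; rewrite (build_cons s) /op; case: b => /= H; lia.
Qed.

Lemma build_in n s : (size s).+1 = n -> in_Hn n (build s).
Proof.
move=> Hs; rewrite /in_Hn /is_partition build_sorted build_pos /perimeter.
have := build_perim s; rewrite (build_cons s) /= => H.
apply/eqP; lia.
Qed.

Lemma build_inj s s' : build s = build s' -> s = s'.
Proof.
elim: s s' => [|b s IH] [|b' s'] //.
- move=> H; have := build_perim [:: b' & s']; rewrite -H /=; lia.
- move=> H; have := build_perim [:: b & s]; rewrite H /=; lia.
rewrite /= /op.
have Hb := build_hd s; have Hb' := build_hd s'.
case: b; case: b' => [] [].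
- move=> Hh Ht; congr (_ :: _); apply: IH.
  by rewrite (build_cons s) (build_cons s') Hh Ht.
- move=> Hh Ht; exfalso; move: Hb; rewrite Ht -Hh; lia.
- move=> Hh Ht; exfalso; move: Hb'; rewrite -Ht Hh; lia.
- by move=> _ H; rewrite (IH _ H).
Qed.

Lemma build_surj N l : head 0 l + size l <= N -> is_partition l ->
  exists s, build s = l.
Proof.
elim: N l => [|N IH] l.
  by case: l => [|x l] /=; [rewrite /is_partition | lia].
case: l => [|x [|y r]]; first by rewrite /is_partition.
- rewrite /is_partition /= andbT => HN Hx.
  case: x HN Hx => [|[|x']] // HN _.
    by exists [::].
  have [s Hs] : exists s, build s = [:: x'.+1].
    by apply: IH => //=; lia.
  by exists (true :: s); rewrite /= Hs.
- rewrite /is_partition /= => HN /andP [/andP [Hxy Hp] /and3P [Hx Hy Hr]].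
  case: (eqVneq x y) => [Exy|Nxy].
    subst y.
    have [s Hs] : exists s, build s = [:: x & r].
      apply: IH => /=; first lia.
      by rewrite /is_partition /= Hp Hx Hr.
    by exists (false :: s); rewrite /= Hs.
  case: x HN Hxy Hx Nxy => [|x'] HN Hxy Hx Nxy; first lia.
  have [s Hs] : exists s, build s = [:: x', y & r].
    apply: IH => /=; first lia.
    rewrite /is_partition /= Hp Hy Hr !andbT /=.
    have : y != x'.+1 by rewrite eq_sym.
    move: Hxy Hy; clear; lia.
  by exists (true :: s); rewrite /= Hs.
Qed.

Fixpoint T (s : seq bool) : seq bool :=
  match s with [::] => [::] | b :: s' => (b != head true s') :: T s' end.
Fixpoint U (s : seq bool) : seq bool :=
  match s with [::] => [::] | c :: t => (c != head true (U t)) :: U t end.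

Lemma UT s : U (T s) = s.
Proof. by elim: s => [|b s IH] //=; rewrite IH; case: b; case: (head true s). Qed.
Lemma TU s : T (U s) = s.
Proof.
elim: s => [|c t IH] //=; rewrite IH; congr (_ :: _).
by case: c; case: (head true (U t)).
Qed.
Lemma size_T s : size (T s) = size s.
Proof. by elim: s => [|b s IH] //=; rewrite IH. Qed.
Lemma size_U s : size (U s) = size s.
Proof. by elim: s => [|b s IH] //=; rewrite IH. Qed.

Lemma rep1 x : rep [:: x] = 0.
Proof. by []. Qed.
Lemma rep2 x y r : rep [:: x, y & r] = (x == y) + rep (y :: r).
Proof.
rewrite /rep /=.
have -> : iota 1 (size r) = map (addn 1) (iota 0 (size r)) by rewrite -iotaDl.
by rewrite count_map.
Qed.

Lemma rep_step b s : rep (build (b :: s)) =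
  if b then rep (build s) - (head true s == false) else (rep (build s)).+1.
Proof.
case: b.
  case: s => [|[] s'] //.
    have Hb := build_hd s'.
    rewrite /= /op /= (build_cons s') /=.
    move: Hb; rewrite (build_cons s') /=.
    case: (behead (build s')) => [|y r] //= Hb.
    rewrite !rep2 subn0; congr (_ + _); apply/eqP; lia.
  rewrite /= /op /= (build_cons s') /= !rep2 eqxx; lia.
by rewrite /= /op (build_cons s) /= rep2 eqxx.
Qed.

Lemma main s : rep (build s) = even_parts (build (T s)) /\
  odd (head 0 (build (T s))) = head true s.
Proof.
elim: s => [|b s [IH1 IH2]] //.
rewrite rep_step IH1 [T _]/= [build (_ :: T s)]/= /op.
move: IH2; rewrite (build_cons (T s)) /even_parts /=.
case: b; case: (head true s) => /= Hp; rewrite ?Hp /=; split => //;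
  rewrite ?Hp ?negbK //=; lia.
Qed.

Theorem theorem2p7 (n : nat) (hn : 0 < n) :
  exists phi : Hn n -> Hn n,
    bijective phi /\ forall lam : Hn n, rep (val lam) = even_parts (val (phi lam)).
Proof.
have Hex : forall lam : Hn n, exists s, build s == val lam.
  move=> [l Hl]; have /andP [Hpart _] := Hl.
  have [s Hs] := @build_surj _ l (leqnn _) Hpart.
  by exists s; apply/eqP.
pose enc (lam : Hn n) := xchoose (Hex lam).
have encE lam : build (enc lam) = val lam by exact: (eqP (xchooseP (Hex lam))).
have encS lam : (size (enc lam)).+1 = n.
  have Hl := valP lam; rewrite -encE /in_Hn /perimeter in Hl.
  case/andP: Hl => _ /eqP <-.
  have := build_perim (enc lam).
  rewrite (build_cons (enc lam)) /=; lia.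
have inT lam : in_Hn n (build (T (enc lam))) by apply: build_in; rewrite size_T.
have inU lam : in_Hn n (build (U (enc lam))) by apply: build_in; rewrite size_U.
pose phi lam : Hn n := exist (in_Hn n) _ (inT lam).
pose psi lam : Hn n := exist (in_Hn n) _ (inU lam).
exists phi; split.
  exists psi => lam; apply: val_inj => /=.
    have -> : enc (phi lam) = T (enc lam) by apply: build_inj; rewrite encE.
    by rewrite UT encE.
  have -> : enc (psi lam) = U (enc lam) by apply: build_inj; rewrite encE.
  by rewrite TU encE.
move=> lam; rewrite -encE /=; exact: (main _).1.
Qed.
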